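(* Let $I$ be an ideal of $\mathbb{S}_n$ ($n\ge1$). The following are equivalent: (1) $\mathbb{S}_n/I$ is left Noetherian; (2) $\mathbb{S}_n/I$ is right Noetherian; (3) $\mathbb{S}_n/I$ is commutative; (4) $\mathfrak a_n\subseteq I$, i.e. $I$ contains all the height one primes $\mathfrak p_1,\dots,\mathfrak p_n$ of $\mathbb{S}_n$.
   Context: $K$ is a field. $\mathbb{S}_n$ is the $K$-algebra generated by $x_1,\dots,x_n,y_1,\dots,y_n$ subject to the defining relations $y_ix_i=1$ for all $i$, and $[x_i,y_j]=[x_i,x_j]=[y_i,y_j]=0$ for all $i\ne j$. For each $i$, $\mathbb{S}_1(i)$ is the subalgebra generated by $x_i,y_i$, and $\mathbb{S}_n=\mathbb{S}_1(1)\otimes\cdots\otimes\mathbb{S}_1(n)$. $F(i)=\bigoplus_{k,l\in\mathbb N}K(x_i^ky_i^l-x_i^{k+1}y_i^{l+1})$ is an ideal of $\mathbb{S}_1(i)$. Define $\mathfrak p_i=\mathbb{S}_1(1)\otimes\cdots\otimes F(i)\otimes\cdots\otimes\mathbb{S}_1(n)$ ($F(i)$ in the $i$-th factor); these are exactly the height one primes of $\mathbb{S}_n$. Set $\mathfrak a_n=\mathfrak p_1+\cdots+\mathfrak p_n$, so that $\mathbb{S}_n/\mathfrak a_n\cong K[x_1^{\pm1},\dots,x_n^{\pm1}]$. *)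

(* Defs.v *)
From HB Require Import structures.
From mathcomp Require Import all_boot all_order all_algebra.
Set Implicit Arguments. Unset Strict Implicit. Unset Printing Implicit Defensive.
Import GRing.Theory.
Local Open Scope ring_scope.

Definition Sn_rel (R : pzRingType) (n : nat) (x y : 'I_n -> R) : Prop :=
  (forall i, y i * x i = 1) /\
  (forall i j, i != j ->
     [/\ x i * y j = y j * x i, x i * x j = x j * x i & y i * y j = y j * y i]).

(* A (with the elements x, y) is the K-algebra generated by x_i, y_i subject
   only to the relations Sn_rel, i.e. A is (a copy of) S_n:
   the relations hold, x, y generate A as a K-algebra, and A has the
   universal property of the presented algebra. *)
Definition is_Sn (K : fieldType) (n : nat) (A : algType K) (x y : 'I_n -> A)
  : Prop :=
  [/\ Sn_rel x y,
      (forall S : A -> Prop,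
          S 1 -> (forall i, S (x i) /\ S (y i)) ->
          (forall a b, S a -> S b -> S (a + b)) ->
          (forall a b, S a -> S b -> S (a * b)) ->
          (forall (k : K) a, S a -> S (k *: a)) ->
          forall a, S a)
    & (forall (B : algType K) (x' y' : 'I_n -> B), Sn_rel x' y' ->
          exists f : {lrmorphism A -> B},
            forall i, f (x i) = x' i /\ f (y i) = y' i)].

(* Spanning elements of the height one prime p_i
   = S_1(1) (x) ... (x) F(i) (x) ... (x) S_1(n):
   (prod_{j<>i} x_j^{a_j} y_j^{b_j}) * (x_i^k y_i^l - x_i^{k+1} y_i^{l+1}). *)
Definition pgen (R : pzRingType) (n : nat) (x y : 'I_n -> R) (i : 'I_n)
  (a b : 'I_n -> nat) (k l : nat) : R :=
  (\prod_(j < n | j != i) (x j ^+ a j * y j ^+ b j)) *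
  (x i ^+ k * y i ^+ l - x i ^+ k.+1 * y i ^+ l.+1).

Definition in_p (K : fieldType) (n : nat) (A : algType K) (x y : 'I_n -> A)
  (i : 'I_n) (v : A) : Prop :=
  exists s : seq (K * (('I_n -> nat) * ('I_n -> nat) * nat * nat)),
    v = \sum_(t <- s) t.1 *: pgen x y i t.2.1.1.1 t.2.1.1.2 t.2.1.2 t.2.2.

Definition in_an (K : fieldType) (n : nat) (A : algType K) (x y : 'I_n -> A)
  (v : A) : Prop :=
  exists w : 'I_n -> A, (forall i, in_p x y i (w i)) /\ v = \sum_(i < n) w i.

Definition is_ideal (R : pzRingType) (I : R -> Prop) : Prop :=
  [/\ I 0, (forall a b, I a -> I b -> I (a + b))
    & (forall a b c, I b -> I (a * b * c))].

Definition is_left_ideal (R : pzRingType) (L : R -> Prop) : Prop :=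
  [/\ L 0, (forall a b, L a -> L b -> L (a + b))
    & (forall r a, L a -> L (r * a))].

Definition is_right_ideal (R : pzRingType) (L : R -> Prop) : Prop :=
  [/\ L 0, (forall a b, L a -> L b -> L (a + b))
    & (forall r a, L a -> L (a * r))].

Definition left_noetherian (R : pzRingType) : Prop :=
  forall L : nat -> R -> Prop,
    (forall k, is_left_ideal (L k)) ->
    (forall k v, L k v -> L k.+1 v) ->
    exists N, forall m, (N <= m)%N -> forall v, L m v -> L N v.

Definition right_noetherian (R : pzRingType) : Prop :=
  forall L : nat -> R -> Prop,
    (forall k, is_right_ideal (L k)) ->
    (forall k v, L k v -> L k.+1 v) ->
    exists N, forall m, (N <= m)%N -> forall v, L m v -> L N v.

Definition comm_ring (R : pzRingType) : Prop := forall a b : R, a * b = b * a.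

(* Main.v *)
Require Import Defs.
From HB Require Import structures.
From mathcomp Require Import all_boot all_order all_algebra.
From Stdlib Require Import Classical.
Import GRing.Theory.
Local Open Scope ring_scope.

Lemma chain_mono (R : pzRingType) (L : nat -> R -> Prop) :
  (forall k v, L k v -> L k.+1 v) ->
  forall k m, (k <= m)%N -> forall v, L k v -> L m v.
Proof.
move=> H k m /subnK <-; elim: (m - k)%N => [|d IH] v Lv //=.
by rewrite addSn; apply: H; apply: IH.
Qed.

Lemma field_noeth (F : fieldType) : left_noetherian F.
Proof.
move=> L HL Hch.
case: (classic (exists k v, L k v /\ v != 0)) => [[k [v [Lv nz]]]|Hn].
  exists k => m km w _.
  have [_ _ Hm] := HL k.
  by rewrite -(divfK nz w); apply: Hm.
exists 0%N => m _ w Lw.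
have [H0 _ _] := HL 0%N.
case: (eqVneq w 0) => [->//|nz].
by exfalso; apply: Hn; exists m, w.
Qed.

Lemma noeth_surj (P B : pzRingType) (f : {rmorphism P -> B}) :
  (forall b, exists p, f p = b) -> left_noetherian P -> left_noetherian B.
Proof.
move=> fs NP L HL Hch.
have HL' : forall k, is_left_ideal (fun p => L k (f p)).
  move=> k; have [H0 HD HM] := HL k; split.
  - by rewrite rmorph0.
  - by move=> a b La Lb; rewrite rmorphD; apply: HD.
  - by move=> r a La; rewrite rmorphM; apply: HM.
have [N HN] := NP (fun k p => L k (f p)) HL' (fun k v => Hch k (f v)).
exists N => m Nm v Lv; have [p pv] := fs v; rewrite -pv; apply: (HN m Nm p).
by rewrite pv.
Qed.

Set Implicit Arguments. Unset Strict Implicit.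

Definition LC (R : comNzRingType) (J : {poly R} -> Prop) (d : nat) (r : R) : Prop :=
  exists p, J p /\ (size p <= d.+1)%N /\ p`_d = r.

Lemma LC_ideal (R : comNzRingType) (J : {poly R} -> Prop) d :
  is_left_ideal J -> is_left_ideal (LC J d).
Proof.
move=> [J0 JD JM]; split.
- by exists 0; rewrite size_poly0 coef0.
- move=> a b [p [Jp [sp <-]]] [q [Jq [sq <-]]]; exists (p + q); split; first exact: JD.
  split; last by rewrite coefD.
  by apply: leq_trans (size_add _ _) _; rewrite geq_max sp sq.
- move=> r a [p [Jp [sp <-]]]; exists (r%:P * p); split; first exact: JM.
  rewrite mul_polyC coefZ; split=> //.
  exact: leq_trans (size_scale_leq _ _) sp.
Qed.

Lemma LC_S (R : comNzRingType) (J : {poly R} -> Prop) d r :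
  is_left_ideal J -> LC J d r -> LC J d.+1 r.
Proof.
move=> [J0 JD JM] [p [Jp [sp <-]]]; exists ('X * p); split; first exact: JM.
rewrite coefXM /=; split=> //.
case: (eqVneq p 0) => [->|nz]; first by rewrite mulr0 size_poly0.
by rewrite mulrC size_mulX.
Qed.

Lemma LC_le (R : comNzRingType) (J : {poly R} -> Prop) d d' r :
  is_left_ideal J -> (d <= d')%N -> LC J d r -> LC J d' r.
Proof.
move=> HJ dd'; apply: (@chain_mono R (fun d => LC J d)) => // k v; exact: LC_S.
Qed.

Lemma LC_key (R : comNzRingType) (J J' : {poly R} -> Prop) :
  is_left_ideal J -> is_left_ideal J' -> (forall p, J p -> J' p) ->
  (forall d r, LC J' d r -> LC J d r) -> forall p, J' p -> J p.
Proof.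
move=> [J0 JD JM] [J0' JD' JM'] JJ' HLC.
suff H : forall d p, J' p -> (size p <= d)%N -> J p.
  by move=> p Jp; apply: (H (size p)).
elim=> [|d IH] p J'p sp.
  by move: sp; rewrite leqn0 size_poly_eq0 => /eqP ->.
have [q [Jq [sq qd]]] := HLC d p`_d (ex_intro _ p (conj J'p (conj sp erefl))).
have -> : p = (p - q) + q by rewrite subrK.
apply: JD => //; apply: IH.
  by rewrite -mulN1r; apply: JD' => //; apply: JM'; apply: JJ'.
have s1 : (size (p - q)%R <= d.+1)%N.
  by apply: leq_trans (size_add _ _) _; rewrite size_opp geq_max sp sq.
have c1 : (p - q)`_d = 0 by rewrite coefB qd subrr.
rewrite leqNgt; apply/negP => hs.
have e : size (p - q) = d.+1 by apply/eqP; rewrite eqn_leq s1 hs.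
have : lead_coef (p - q) = 0 by rewrite lead_coefE e.
move/eqP; rewrite lead_coef_eq0 => /eqP h.
by move: e; rewrite h size_poly0.
Qed.

Lemma hilbert (R : comNzRingType) : left_noetherian R -> left_noetherian {poly R}.
Proof.
move=> NR J HJ Hch.
have Jmono := @chain_mono _ _ Hch.
pose M k r := exists d, LC (J k) d r.
have HM : forall k, is_left_ideal (M k).
  move=> k; have HLk := LC_ideal 0 (HJ k); split.
  - by exists 0%N; case: HLk.
  - move=> a b [d1 h1] [d2 h2]; exists (maxn d1 d2).
    have [_ HD _] := LC_ideal (maxn d1 d2) (HJ k); apply: HD.
      by apply: (LC_le (HJ k) _ h1); rewrite leq_maxl.
    by apply: (LC_le (HJ k) _ h2); rewrite leq_maxr.
  - move=> r a [d h]; exists d; have [_ _ HMM] := LC_ideal d (HJ k); exact: HMM.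
have HMch : forall k v, M k v -> M k.+1 v.
  move=> k v [d [p [Jp sp]]]; exists d, p; split=> //; exact: Hch.
have [k0 Hk0] := NR M HM HMch.
have [D HD] := NR (fun d => LC (J k0) d) (fun d => LC_ideal d (HJ k0))
  (fun d v => LC_S (HJ k0)).
have LCmono : forall k m d r, (k <= m)%N -> LC (J k) d r -> LC (J m) d r.
  move=> k m d r km [p [Jp sp]]; exists p; split=> //; exact: (Jmono k m km).
have claim : forall D', exists K, (k0 <= K)%N /\ forall d, (d < D')%N ->
    forall m, (K <= m)%N -> forall r, LC (J m) d r -> LC (J K) d r.
  elim=> [|D' [K [k0K HK]]]; first by exists k0; split.
  have [N HN] := NR (fun k => LC (J k) D') (fun k => LC_ideal D' (HJ k))
    (fun k v => LCmono k k.+1 D' v (leqnSn k)).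
  exists (maxn K N); split; first by apply: leq_trans k0K (leq_maxl _ _).
  move=> d; rewrite ltnS leq_eqVlt => /orP [/eqP ->|dD] m Km r h.
    apply: (LCmono N); first exact: leq_maxr.
    apply: (HN m) => //; exact: leq_trans (leq_maxr _ _) Km.
  apply: (LCmono K); first exact: leq_maxl.
  apply: (HK d dD m) => //; exact: leq_trans (leq_maxl _ _) Km.
have [K [k0K HK]] := claim D.
exists K => m Km.
apply: (LC_key (HJ K) (HJ m) (Jmono K m Km)) => d r h.
case: (ltnP d D) => [dD|Dd]; first exact: (HK d dD m Km).
apply: (LCmono k0) => //.
have [d' h'] := Hk0 m (leq_trans k0K Km) r (ex_intro _ d h).
case: (leqP d' d) => [d'd|dd']; first exact: LC_le (HJ k0) d'd h'.
apply: (LC_le (HJ k0) Dd); apply: (HD d') => //.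
exact: leq_trans Dd (ltnW dd').
Qed.

Fixpoint polyn (K : fieldType) (m : nat) : comNzRingType :=
  match m with 0 => K | m'.+1 => {poly (polyn K m')} end.

Lemma polyn_noeth (K : fieldType) m : left_noetherian (polyn K m).
Proof. elim: m => [|m IH] /=; [exact: field_noeth | exact: hilbert]. Qed.

Lemma comm_all (C : comNzRingType) (R : nzSemiRingType) (f : {rmorphism R -> C}) u :
  commr_rmorph f u.
Proof. by move=> x; rewrite /GRing.comm mulrC. Qed.

Fixpoint phin (K : fieldType) (C : comNzRingType) (f0 : {rmorphism K -> C})
   (g : nat -> C) (m : nat) : {rmorphism polyn K m -> C} :=
  match m return {rmorphism polyn K m -> C} with
  | 0 => f0
  | m'.+1 => horner_morph (comm_all (phin f0 g m') (g m'))
  end.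

Lemma phin_img (K : fieldType) (C : comNzRingType) (f0 : {rmorphism K -> C})
   (g : nat -> C) (m : nat) (b : C) :
  (forall S : C -> Prop, (forall k, S (f0 k)) -> (forall j, (j < m)%N -> S (g j)) ->
     (forall a b, S a -> S b -> S (a + b)) -> (forall a b, S a -> S b -> S (a * b)) ->
     S b) ->
  exists p, phin f0 g m p = b.
Proof.
move=> H; apply: (H (fun b => exists p, phin f0 g m p = b)); clear H b.
- elim: m => [|m IH] k; first by exists k.
  have [p <-] := IH k; exists p%:P => /=; exact: horner_morphC.
- elim: m => [|m IH] j //; rewrite ltnS leq_eqVlt => /orP [/eqP ->|jm].
    by exists 'X => /=; exact: horner_morphX.
  have [p <-] := IH j jm; exists p%:P => /=; exact: horner_morphC.
- by move=> a c [p <-] [q <-]; exists (p + q); rewrite rmorphD.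
- by move=> a c [p <-] [q <-]; exists (p * q); rewrite rmorphM.
Qed.

Definition BB {B : pzRingType} (Hc : comm_ring B) (H1 : (1:B) != 0) : Type := B.
HB.instance Definition _ (B : pzRingType) (Hc : comm_ring B) (H1 : (1:B) != 0) :=
  GRing.PzRing.copy (BB Hc H1) B.
HB.instance Definition _ (B : pzRingType) (Hc : comm_ring B) (H1 : (1:B) != 0) :=
  GRing.PzRing_hasCommutativeMul.Build (BB Hc H1) Hc.
HB.instance Definition _ (B : pzRingType) (Hc : comm_ring B) (H1 : (1:B) != 0) :=
  GRing.PzSemiRing_isNonZero.Build (BB Hc H1) H1.

Definition f0 (K : fieldType) (A : algType K) (B : pzRingType) (pi : {rmorphism A -> B})
  (Hc : comm_ring B) (H1 : (1:B) != 0) : K -> BB Hc H1 := fun k => pi (k%:A).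

Lemma f0_nmod (K : fieldType) (A : algType K) (B : pzRingType) (pi : {rmorphism A -> B})
  (Hc : comm_ring B) (H1 : (1:B) != 0) : nmod_morphism (f0 pi Hc H1).
Proof.
split; rewrite /f0; first by rewrite scale0r rmorph0.
by move=> a b; rewrite scalerDl rmorphD.
Qed.
Lemma f0_mon (K : fieldType) (A : algType K) (B : pzRingType) (pi : {rmorphism A -> B})
  (Hc : comm_ring B) (H1 : (1:B) != 0) : monoid_morphism (f0 pi Hc H1).
Proof.
split; rewrite /f0; first by rewrite scale1r rmorph1.
by move=> a b; rewrite -rmorphM /= -scalerAl mul1r scalerA.
Qed.
HB.instance Definition _ (K : fieldType) (A : algType K) (B : pzRingType) (pi : {rmorphism A -> B})
  (Hc : comm_ring B) (H1 : (1:B) != 0) := GRing.isNmodMorphism.Build _ _ _ (f0_nmod pi Hc H1).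
HB.instance Definition _ (K : fieldType) (A : algType K) (B : pzRingType) (pi : {rmorphism A -> B})
  (Hc : comm_ring B) (H1 : (1:B) != 0) := GRing.isMonoidMorphism.Build _ _ _ (f0_mon pi Hc H1).

Lemma comm_noeth (K : fieldType) (A : algType K) (B : pzRingType) (pi : {rmorphism A -> B})
  (Hc : comm_ring B) (m : nat) (g : nat -> B) :
  (forall b : B, forall S : B -> Prop, (forall k, S (pi (k%:A))) ->
     (forall j, (j < m)%N -> S (g j)) ->
     (forall a b, S a -> S b -> S (a + b)) -> (forall a b, S a -> S b -> S (a * b)) ->
     S b) ->
  left_noetherian B.
Proof.
move=> H.
case: (eqVneq (1:B) 0) => [e10|H1].
  move=> L HL _; exists 0%N => m' _ v _.
  have -> : v = 0 by rewrite -[v]mul1r e10 mul0r.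
  by case: (HL 0%N).
pose C := BB Hc H1.
have : left_noetherian C.
  apply: (@noeth_surj (polyn K m) C (phin (f0 pi Hc H1) (g : nat -> C) m)).
    move=> b; apply: phin_img => S S0 Sg SD SM.
    exact: (H b S S0 Sg SD SM).
  exact: polyn_noeth.
done.
Qed.

Lemma powYX (R : pzRingType) (X Y : R) : Y * X = 1 -> forall k, Y ^+ k * X ^+ k = 1.
Proof.
move=> YX; elim=> [|k IH]; first by rewrite !expr0 mulr1.
by rewrite exprSr exprS mulrA -(mulrA _ Y) YX mulr1.
Qed.

Lemma eXpow (R : pzRingType) (X Y : R) : Y * X = 1 -> forall j, (0 < j)%N ->
  (1 - X * Y) * X ^+ j = 0.
Proof.
move=> YX [|j] // _; rewrite exprS mulrA mulrBl mul1r -mulrA YX mulr1 subrr mul0r //.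
Qed.

Lemma Ypowe (R : pzRingType) (X Y : R) : Y * X = 1 -> forall j, (0 < j)%N ->
  Y ^+ j * (1 - X * Y) = 0.
Proof.
move=> YX [|j] // _; rewrite exprSr -mulrA mulrBr mulr1 mulrA YX mul1r subrr mulr0 //.
Qed.

Lemma YkXN (R : pzRingType) (X Y : R) : Y * X = 1 -> forall k N, (k <= N)%N ->
  Y ^+ k * X ^+ N = X ^+ (N - k).
Proof.
move=> YX k N kN; rewrite -(subnKC kN) exprD mulrA powYX // mul1r.
by rewrite (subnKC kN).
Qed.

Lemma YNXk (R : pzRingType) (X Y : R) : Y * X = 1 -> forall k N, (k <= N)%N ->
  Y ^+ N * X ^+ k = Y ^+ (N - k).
Proof.
move=> YX k N kN; rewrite -(subnKC kN) addnC exprD -mulrA powYX // mulr1.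
by rewrite addnK.
Qed.

Lemma dfin_left (R : pzRingType) (X Y : R) : Y * X = 1 -> left_noetherian R -> X * Y = 1.
Proof.
move=> YX NR; set e := 1 - X * Y.
pose L m v := exists r : nat -> R, v = \sum_(k < m) r k * (e * Y ^+ k).
have HL : forall m, is_left_ideal (L m).
  move=> m; split.
  - by exists (fun _ => 0); rewrite big1 // => i _; rewrite mul0r.
  - move=> a b [r1 ->] [r2 ->]; exists (fun k => r1 k + r2 k).
    by rewrite -big_split /=; apply: eq_bigr => i _; rewrite -mulrDl.
  - move=> c a [r ->]; exists (fun k => c * r k).
    by rewrite mulr_sumr; apply: eq_bigr => i _; rewrite mulrA.
have Hch : forall m v, L m v -> L m.+1 v.
  move=> m v [r ->]; exists (fun k => if (k < m)%N then r k else 0).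
  rewrite big_ord_recr /= ltnn mul0r addr0.
  by apply: eq_bigr => i _; rewrite /= ltn_ord.
have [N HN] := NR L HL Hch.
have : L N (e * Y ^+ N).
  apply: (HN N.+1 (leqnSn N)); exists (fun k => if k == N then 1 else 0).
  rewrite big_ord_recr /= eqxx mul1r big1 ?add0r // => i _.
  by rewrite /= (ltn_eqF (ltn_ord i)) mul0r.
move=> [r hr].
have e0 : e = 0.
  have ee : e * e = e.
    rewrite /e mulrBl mul1r mulrBr mulr1 -!mulrA (mulrA Y) YX mul1r subrr subr0 //.
  have := congr1 (fun z => z * (X ^+ N * e)) hr => /=.
  rewrite -mulrA (mulrA (Y ^+ N)) powYX // mul1r ee => ->.
  rewrite mulr_suml big1 // => i _.
  rewrite -!mulrA (mulrA (Y ^+ i)) YkXN ?(ltnW (ltn_ord i)) //.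
  by rewrite (mulrA e) eXpow ?subn_gt0 ?ltn_ord // mul0r mulr0.
by apply/eqP; rewrite eq_sym -subr_eq0; apply/eqP.
Qed.

Lemma dfin_right (R : pzRingType) (X Y : R) : Y * X = 1 -> right_noetherian R -> X * Y = 1.
Proof.
move=> YX NR; set e := 1 - X * Y.
pose L m v := exists r : nat -> R, v = \sum_(k < m) (X ^+ k * e) * r k.
have HL : forall m, is_right_ideal (L m).
  move=> m; split.
  - by exists (fun _ => 0); rewrite big1 // => i _; rewrite mulr0.
  - move=> a b [r1 ->] [r2 ->]; exists (fun k => r1 k + r2 k).
    by rewrite -big_split /=; apply: eq_bigr => i _; rewrite -mulrDr.
  - move=> c a [r ->]; exists (fun k => r k * c).
    by rewrite mulr_suml; apply: eq_bigr => i _; rewrite mulrA.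
have Hch : forall m v, L m v -> L m.+1 v.
  move=> m v [r ->]; exists (fun k => if (k < m)%N then r k else 0).
  rewrite big_ord_recr /= ltnn mulr0 addr0.
  by apply: eq_bigr => i _; rewrite /= ltn_ord.
have [N HN] := NR L HL Hch.
have : L N (X ^+ N * e).
  apply: (HN N.+1 (leqnSn N)); exists (fun k => if k == N then 1 else 0).
  rewrite big_ord_recr /= eqxx mulr1 big1 ?add0r // => i _.
  by rewrite /= (ltn_eqF (ltn_ord i)) mulr0.
move=> [r hr].
have e0 : e = 0.
  have ee : e * e = e.
    rewrite /e mulrBl mul1r mulrBr mulr1 -!mulrA (mulrA Y) YX mul1r subrr subr0 //.
  have := congr1 (fun z => (e * Y ^+ N) * z) hr => /=.
  rewrite -mulrA (mulrA (Y ^+ N)) powYX // mul1r ee => ->.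
  rewrite mulr_sumr big1 // => i _.
  rewrite !mulrA -(mulrA e) YNXk ?(ltnW (ltn_ord i)) //.
  by rewrite -(mulrA e) Ypowe ?subn_gt0 ?ltn_ord // mulr0 mul0r.
by apply/eqP; rewrite eq_sym -subr_eq0; apply/eqP.
Qed.

Lemma right_of_left (B : pzRingType) : comm_ring B -> left_noetherian B -> right_noetherian B.
Proof.
move=> Hc NB L HL Hch; apply: NB => // k.
have [H0 HD HM] := HL k; split=> // r a La; rewrite Hc; exact: HM.
Qed.

Lemma gen_comm (K : fieldType) (n : nat) (A : algType K)
  (x y : 'I_n -> A) (B : pzRingType) (pi : {rmorphism A -> B}) (z : B) :
  is_Sn x y -> (forall b : B, exists a, pi a = b) ->
  (forall j, pi (x j) * z = z * pi (x j) /\ pi (y j) * z = z * pi (y j)) ->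
  forall a, pi a * z = z * pi a.
Proof.
move=> [_ Hgen _] Hs Hg; apply: Hgen.
- by rewrite rmorph1 mul1r mulr1.
- exact: Hg.
- by move=> a b ha hb; rewrite rmorphD mulrDl mulrDr ha hb.
- by move=> a b ha hb; rewrite rmorphM -mulrA hb mulrA ha mulrA.
- move=> k a ha; rewrite -mulr_algl rmorphM -mulrA ha mulrA.
  have hk : pi (k%:A) * z = z * pi (k%:A).
    have [c <-] := Hs z.
    by rewrite -!rmorphM mulr_algl mulr_algr.
  by rewrite hk mulrA.
Qed.

Lemma all_xy_comm (K : fieldType) (n : nat) (A : algType K)
  (x y : 'I_n -> A) (B : pzRingType) (pi : {rmorphism A -> B}) :
  is_Sn x y -> (forall b : B, exists a, pi a = b) ->
  (forall i, pi (x i) * pi (y i) = 1) -> comm_ring B.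
Proof.
move=> Hs Hsur Hxy.
have [[HyX Hrel] _ _] := Hs.
have YX : forall i, pi (y i) * pi (x i) = 1 by move=> i; rewrite -rmorphM HyX rmorph1.
have gens : forall i j, [/\ pi (x i) * pi (x j) = pi (x j) * pi (x i),
    pi (x i) * pi (y j) = pi (y j) * pi (x i),
    pi (y i) * pi (x j) = pi (x j) * pi (y i) &
    pi (y i) * pi (y j) = pi (y j) * pi (y i)].
  move=> i j; case: (eqVneq i j) => [<-|ij]; first by rewrite Hxy YX.
  have ji : j != i by rewrite eq_sym.
  have [h1 h2 h3] := Hrel i j ij; have [h1' _ _] := Hrel j i ji.
  by split; rewrite -!rmorphM ?h1 ?h2 ?h3 ?h1'.
have gx : forall i a, pi a * pi (x i) = pi (x i) * pi a.
  move=> i; apply: (gen_comm Hs Hsur) => j.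
  by have [h1 _ h3 _] := gens j i.
have gy : forall i a, pi a * pi (y i) = pi (y i) * pi a.
  move=> i; apply: (gen_comm Hs Hsur) => j.
  by have [_ h2 _ h4] := gens j i.
move=> b c; have [a <-] := Hsur b; have [d <-] := Hsur c.
apply: (gen_comm Hs Hsur) => j.
by rewrite gx gy.
Qed.

Lemma an_iff (K : fieldType) (n : nat) (A : algType K)
  (x y : 'I_n -> A) (I : A -> Prop) (B : pzRingType) (pi : {rmorphism A -> B}) :
  is_ideal I -> (forall a, I a <-> pi a = 0) ->
  (forall v, in_an x y v -> I v) <-> (forall i, pi (x i) * pi (y i) = 1).
Proof.
move=> [I0 ID IM] HI; split.
- move=> H i.
  have Iv : I (pgen x y i (fun _ => 0%N) (fun _ => 0%N) 0 0).
    apply: H; exists (fun j => if j == i then pgen x y i (fun _ => 0%N) (fun _ => 0%N) 0 0 else 0).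
    split.
      move=> j; case: (eqVneq j i) => [->|_].
        exists [:: (1, (fun _ => 0%N, fun _ => 0%N, 0%N, 0%N))].
        by rewrite big_seq1 scale1r.
      by exists [::]; rewrite big_nil.
    by rewrite (bigD1 i) //= eqxx big1 ?addr0 // => j /negbTE ->.
  move/HI: Iv; rewrite /pgen big1 => [|j _]; last by rewrite !expr0 mulr1.
  rewrite mul1r !expr0 !expr1 mulr1 rmorphB rmorph1 rmorphM => /eqP.
  by rewrite subr_eq0 eq_sym => /eqP.
- move=> Hxy v [w [Hw ->]].
  apply: (big_ind I) => // i _.
  have [s ->] := Hw i.
  apply: (big_ind I) => // t _.
  rewrite -mulr_algl -[_ * _]mulr1; apply: IM; apply/HI.
  rewrite /pgen rmorphM rmorphB !rmorphM !rmorphXn.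
  by rewrite exprSr exprS mulrA -(mulrA _ (pi (x i))) Hxy mulr1 subrr mulr0.
Qed.

Unset Implicit Arguments. Set Strict Implicit.

Theorem theorem5p1 (K : fieldType) (n : nat) (A : algType K)
  (x y : 'I_n -> A) (I : A -> Prop) (B : pzRingType) (pi : {rmorphism A -> B}) :
  (0 < n)%N -> is_Sn x y -> is_ideal I ->
  (forall a, I a <-> pi a = 0) -> (forall b : B, exists a, pi a = b) ->
  [/\ left_noetherian B <-> right_noetherian B,
      left_noetherian B <-> comm_ring B
    & left_noetherian B <-> (forall v, in_an x y v -> I v)].
Proof.
move=> n0 Hs HIid HI Hsur.
have [[HyX Hrel] Hgen _] := Hs.
have YX : forall i, pi (y i) * pi (x i) = 1 by move=> i; rewrite -rmorphM HyX rmorph1.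
have c_xy : comm_ring B -> forall i, pi (x i) * pi (y i) = 1.
  by move=> Hc i; rewrite Hc YX.
have c_ln : comm_ring B -> left_noetherian B.
  move=> Hc.
  pose i0 : 'I_n := Ordinal n0.
  pose g j := if odd j then pi (y (insubd i0 j./2)) else pi (x (insubd i0 j./2)).
  apply: (@comm_noeth K A B pi Hc n.*2 g) => b S Sk Sg SD SM.
  have [a <-] := Hsur b.
  apply: (Hgen (fun a => S (pi a))).
  - by rewrite -(scale1r 1) -/(1%:A) ; apply: Sk.
  - move=> i; split.
      have := Sg (i.*2)%N; rewrite /g odd_double doubleK.
      have -> : insubd i0 i = i by apply: val_inj; rewrite val_insubd ltn_ord.
      by apply; rewrite ltn_double.
    have := Sg (i.*2.+1)%N; rewrite /g /= odd_double /= uphalf_double.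
    have -> : insubd i0 i = i by apply: val_inj; rewrite val_insubd ltn_ord.
    by apply; rewrite -doubleS leq_double.
  - by move=> a1 a2 h1 h2; rewrite rmorphD; apply: SD.
  - by move=> a1 a2 h1 h2; rewrite rmorphM; apply: SM.
  - by move=> k a1 h; rewrite -mulr_algl rmorphM; apply: SM.
have ln_c : left_noetherian B -> comm_ring B.
  move=> NB; apply: (all_xy_comm Hs Hsur) => i; exact: dfin_left (YX i) NB.
have rn_c : right_noetherian B -> comm_ring B.
  move=> NB; apply: (all_xy_comm Hs Hsur) => i; exact: dfin_right (YX i) NB.
have Han := an_iff x y HIid HI.
split; split.
- by move=> h; apply: right_of_left (ln_c h) h.
- by move=> h; apply: c_ln; apply: rn_c.
- exact: ln_c.
- exact: c_ln.
- by move=> h; apply/Han; apply: c_xy; apply: ln_c.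
- by move=> h; apply: c_ln; apply: (all_xy_comm Hs Hsur); apply/Han.
Qed.
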